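(* Under the multi-view latent factor model described in the context, let $\eta(x)=\mathbb{P}(Y=1\mid X=x)$ be the regression function of the label on a single view, and let $f^\ast(x)=1$ if $\eta(x)\ge 1/2$ and $f^\ast(x)=-1$ otherwise be the Bayes classification rule. Then there exist functions $\tilde\eta$ and $\tilde f^\ast$ on $\mathbb{R}^K$ such that $\eta(x)=\tilde\eta(U^Tx)$ and $f^\ast(x)=\tilde f^\ast(U^Tx)$ for all $x$.
   Context: Multi-view latent factor model: a sample consists of a latent vector $Z\in\mathbb{R}^K$, a label $Y\in\{-1,1\}$, and views $X\in\mathbb{R}^d$. The pair $(Z,Y)$ is drawn from a distribution $\pi(Z,Y)$ such that the conditional distribution of $Z$ given $Y$ has a density. Given $Z$, the views are drawn independently from a continuous conditional distribution $f(X\mid Z)$ of factor form $X=BZ+\epsilon$, where $B=(b_1,\dots,b_K)\in\mathbb{R}^{d\times K}$, $\epsilon$ is a mean-zero random vector independent of $Z$ (independent across views and samples), $B^TB=\Lambda=\mathrm{diag}(\lambda_1,\dots,\lambda_K)$ with $\lambda_1\ge\dots\ge\lambda_K>0$, $\mathrm{Var}(Z)=I_K$, and $(I_d-B(B^TB)^{-1}B^T)\epsilon$ is independent of $B^T\epsilon$. The label $Y$ is conditionally independent of the views given $Z$. Write $U=B\Lambda^{-1/2}$. *)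

(* Defs.v *)
From HB Require Import structures.
From mathcomp Require Import all_boot all_order all_algebra.
From mathcomp Require Import all_classical all_reals all_analysis.

Set Implicit Arguments.
Unset Strict Implicit.
Unset Printing Implicit Defensive.

Import Order.TTheory GRing.Theory Num.Theory.
Local Open Scope classical_set_scope.
Local Open Scope ring_scope.

Section Defs.
Context {R : realType}.

(* Borel sigma-algebra on R^n (column vectors 'cV[R]_n): the sigma-algebra
   generated by the coordinate projections (= product Borel sigma-algebra). *)
Definition cborel (n : nat) : set (set 'cV[R]_n) :=
  <<s [set S | exists (i : 'I_n) (B : set R),
               measurable B /\ S = (fun x : 'cV[R]_n => x i ord0) @^-1` B] >>.

Definition cborel_fun (n : nat) (g : 'cV[R]_n -> R) : Prop :=
  forall B : set R, measurable B -> cborel (g @^-1` B).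

Definition box (n : nat) (a b : 'cV[R]_n) : set 'cV[R]_n :=
  [set x | forall i : 'I_n, a i ord0 <= x i ord0 <= b i ord0].

Definition box_vol (n : nat) (a b : 'cV[R]_n) : R :=
  \prod_(i < n) Num.max 0 (b i ord0 - a i ord0).

Definition lebesgue_null (n : nat) (N : set 'cV[R]_n) : Prop :=
  forall e : R, 0 < e ->
    exists a b : nat -> 'cV[R]_n,
      N `<=` \bigcup_k box (a k) (b k) /\
      (\sum_(0 <= k <oo) (box_vol (a k) (b k))%:E <= e%:E)%E.

Context {dT : measure_display} {T : measurableType dT} (P : probability T R).

Definition rvec (n : nat) (V : T -> 'cV[R]_n) : Prop :=
  forall i : 'I_n, measurable_fun setT (fun w => V w i ord0).

(* the law of V is absolutely continuous w.r.t. Lebesgue measure on R^n,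
   i.e. V has a density *)
Definition has_density (n : nat) (V : T -> 'cV[R]_n) : Prop :=
  forall N, cborel N -> lebesgue_null N -> P (V @^-1` N) = 0%E.

Definition indep2 (n p : nat) (V : T -> 'cV[R]_n) (W : T -> 'cV[R]_p) : Prop :=
  forall A B, cborel A -> cborel B ->
    P (V @^-1` A `&` W @^-1` B) = (P (V @^-1` A) * P (W @^-1` B))%E.

Definition mutual_indep (K d m : nat) (Z : T -> 'cV[R]_K)
    (E : 'I_m -> T -> 'cV[R]_d) : Prop :=
  forall (C : set 'cV[R]_K) (B : 'I_m -> set 'cV[R]_d),
    cborel C -> (forall j, cborel (B j)) ->
    P (Z @^-1` C `&` \bigcap_(j in [set: 'I_m]) (E j @^-1` B j)) =
    (P (Z @^-1` C) * \prod_(j < m) P (E j @^-1` B j))%E.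

(* g (a Borel function on R^n) is a version of the conditional probability
   P(Ev | V = .), i.e. g(V) is a version of P(Ev | sigma(V)) *)
Definition cond_prob_version (n : nat) (V : T -> 'cV[R]_n) (Ev : set T)
    (g : 'cV[R]_n -> R) : Prop :=
  cborel_fun g /\
  forall C, cborel C ->
    P (Ev `&` V @^-1` C) = (\int[P]_(w in V @^-1` C) (g (V w))%:E)%E.

Definition cond_indep (K d m : nat) (Y : T -> R)
    (X : 'I_m -> T -> 'cV[R]_d) (Z : T -> 'cV[R]_K) : Prop :=
  forall (A : set R) (B : 'I_m -> set 'cV[R]_d),
    measurable A -> (forall j, cborel (B j)) ->
    exists g h : 'cV[R]_K -> R,
      cond_prob_version Z (Y @^-1` A) g /\
      cond_prob_version Z (\bigcap_(j in [set: 'I_m]) (X j @^-1` B j)) h /\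
      forall C, cborel C ->
        P (Y @^-1` A `&` \bigcap_(j in [set: 'I_m]) (X j @^-1` B j)
             `&` Z @^-1` C) =
        (\int[P]_(w in Z @^-1` C) (g (Z w) * h (Z w))%:E)%E.

End Defs.

(* Main.v *)
Require Import Defs.
From HB Require Import structures.
From mathcomp Require Import all_boot all_order all_algebra.
From mathcomp Require Import all_classical all_reals all_analysis.
From mathcomp Require Import measurable_realfun.

Import Order.TTheory GRing.Theory Num.Theory.
Local Open Scope classical_set_scope.
Local Open Scope ring_scope.

Definition cvgen (R : realType) (n : nat) : set (set 'cV[R]_n) :=
  [set S | exists (i : 'I_n) (B : set R),
               measurable B /\ S = (fun x : 'cV[R]_n => x i ord0) @^-1` B].
Definition CVt (R : realType) n := 'cV[R]_n.
HB.instance Definition _ (R : realType) n := Choice.on (CVt R n).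
HB.instance Definition _ (R : realType) n := isPointed.Build (CVt R n) 0.
Definition CV (R : realType) n := g_sigma_algebraType (@cvgen R n : set (set (CVt R n))).

Section meas.
Variable R : realType.

Lemma CV_measurableE n (A : set (CV R n)) : measurable A = cborel A.
Proof. by []. Qed.

Lemma mcv_coord n (i : 'I_n) : measurable_fun setT (fun x : CV R n => x i ord0).
Proof.
move=> _ B mB; rewrite setTI; apply: sub_sigma_algebra; by exists i, B.
Qed.

Lemma mcv_of_coord d' (T' : measurableType d') n (V : T' -> CV R n) :
  (forall i, measurable_fun setT (fun w => V w i ord0)) -> measurable_fun setT V.
Proof.
move=> hV; apply: (measurability (cvgen R n : set (set (CV R n)))); first by [].
move=> _ [S [i [B [mB ->]]] <-].
have := hV i measurableT B mB; by rewrite setTI.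
Qed.

Lemma mcv_coordT d' (T' : measurableType d') n (V : T' -> CV R n) i :
  measurable_fun setT V -> measurable_fun setT (fun w => V w i ord0).
Proof.
move=> mV; apply: (@measurableT_comp _ _ _ _ _ _ (fun x : CV R n => x i ord0)) => //.
exact: mcv_coord.
Qed.

Lemma mcv_lin d' (T' : measurableType d') n p (M : 'M[R]_(p, n)) (V : T' -> CV R n) :
  measurable_fun setT V -> measurable_fun setT (fun w => (M *m V w : CV R p)).
Proof.
move=> mV; apply: mcv_of_coord => i.
under eq_fun do rewrite mxE.
apply: measurable_sum => k.
apply: measurable_realfun.measurable_funM; first exact: measurable_cst.
exact: mcv_coordT.
Qed.

Lemma mcv_add d' (T' : measurableType d') n (V1 V2 : T' -> CV R n) :
  measurable_fun setT V1 -> measurable_fun setT V2 ->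
  measurable_fun setT (fun w => (V1 w + V2 w : CV R n)).
Proof.
move=> m1 m2; apply: mcv_of_coord => i.
under eq_fun do rewrite mxE.
by apply: measurable_realfun.measurable_funD; exact: mcv_coordT.
Qed.

Lemma mcv_id n : measurable_fun setT (fun x : CV R n => x).
Proof. exact: measurable_id. Qed.

Lemma cborel_lin n p (M : 'M[R]_(p, n)) (A : set 'cV[R]_p) :
  cborel A -> cborel ((fun x : 'cV[R]_n => M *m x) @^-1` A).
Proof.
move=> mA.
have := @mcv_lin _ (CV R n) n p M (fun x => x) (@mcv_id n) measurableT A mA.
by rewrite setTI.
Qed.

Lemma rvec_meas d' (T' : measurableType d') (P' : probability T' R) n (V : T' -> 'cV[R]_n) :
  rvec V -> measurable_fun setT (V : T' -> CV R n).
Proof. by move=> hV; apply: mcv_of_coord. Qed.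

End meas.
Arguments mcv_coord {R n}.
Arguments mcv_of_coord {R d' T' n V}.
Arguments mcv_coordT {R d' T' n V} i.
Arguments mcv_lin {R d' T' n p} M {V}.
Arguments mcv_add {R d' T' n V1 V2}.
Arguments cborel_lin {R n p} M {A}.
Arguments rvec_meas {R d' T'} P' {n V}.

Definition pfm d d' (T1 : measurableType d) (T2 : measurableType d') (R : realType)
  (m : set T1 -> \bar R) (f : T1 -> T2) (mf : measurable_fun setT f) : set T2 -> \bar R :=
  pushforward m f.
Arguments pfm {d d' T1 T2 R} m {f} mf.

Section pfm_inst.
Context d d' (T1 : measurableType d) (T2 : measurableType d') (R : realType).
Variables (m : {measure set T1 -> \bar R}) (f : T1 -> T2).
Hypothesis mf : measurable_fun setT f.

Let pfm0 : pfm m mf set0 = 0%E.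
Proof. by rewrite /pfm /pushforward preimage_set0 measure0. Qed.
Let pfm_ge0 A : (0 <= pfm m mf A)%E.
Proof. exact: measure_ge0. Qed.
Let pfm_sa : semi_sigma_additive (pfm m mf).
Proof.
move=> F mF tF mUF; rewrite /pfm /pushforward preimage_bigcup.
apply: measure_semi_sigma_additive.
- by move=> n; rewrite -[X in measurable X]setTI; exact: mf.
- apply/trivIsetP => /= i j _ _ ij; rewrite -preimage_setI.
  by move/trivIsetP : tF => /(_ _ _ _ _ ij) ->//; rewrite preimage_set0.
- by rewrite -preimage_bigcup -[X in measurable X]setTI; exact: mf.
Qed.
HB.instance Definition _ := isMeasure.Build _ _ _ (pfm m mf) pfm0 pfm_ge0 pfm_sa.
End pfm_inst.

Section pfm_fin_inst.
Context d d' (T1 : measurableType d) (T2 : measurableType d') (R : realType).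
Variables (m : {finite_measure set T1 -> \bar R}) (f : T1 -> T2).
Hypothesis mf : measurable_fun setT f.
Let pfm_fin : fin_num_fun (pfm m mf).
Proof.
move=> A mA; rewrite /pfm /pushforward; apply: fin_num_measure.
by rewrite -[X in measurable X]setTI; exact: mf.
Qed.
HB.instance Definition _ := @Measure_isFinite.Build _ _ _ (pfm m mf) pfm_fin.
End pfm_fin_inst.

Definition dens d (T : measurableType d) (R : realType) (m : {measure set T -> \bar R})
  (f : T -> \bar R) (mf : measurable_fun setT f) (f0 : forall x, (0 <= f x)%E) :
  set T -> \bar R := fun A => (\int[m]_(x in A) f x)%E.
Arguments dens {d T R} m {f} mf f0.

Section dens_inst.
Context d (T : measurableType d) (R : realType).
Variables (m : {measure set T -> \bar R}) (f : T -> \bar R).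
Hypotheses (mf : measurable_fun [set: T] f) (f0 : forall x, (0 <= f x)%E).

Let dens0 : dens m mf f0 set0 = 0%E.
Proof. by rewrite /dens integral_set0. Qed.
Let dens_ge0 A : (0 <= dens m mf f0 A)%E.
Proof. by apply: integral_ge0 => x _; exact: f0. Qed.
Let dens_sa : semi_sigma_additive (dens m mf f0).
Proof.
move=> F mF tF mUF; rewrite /dens.
rewrite ge0_integral_bigcup//; last first.
  exact: measurable_funTS.
apply: is_cvg_ereal_nneg_natsum => n _.
by apply: integral_ge0 => x _; exact: f0.
Qed.
HB.instance Definition _ := isMeasure.Build _ _ _ (dens m mf f0) dens0 dens_ge0 dens_sa.
End dens_inst.

Section pfm_integral.
Local Open Scope ereal_scope.
Context d d' (T1 : measurableType d) (T2 : measurableType d') (R : realType).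
Variables (m : {measure set T1 -> \bar R}) (f : T1 -> T2).
Hypothesis mf : measurable_fun setT f.

Lemma pfm_integral (D : set T2) (g : T2 -> \bar R) : measurable D ->
  measurable_fun D g -> (forall y, D y -> 0 <= g y) ->
  \int[pfm m mf]_(y in D) g y = \int[m]_(x in f @^-1` D) g (f x).
Proof.
move=> mD mg g0.
exact: (@ge0_integral_pushforward _ _ _ _ R f mf m D g mD mg (fun y h => g0 y (set_mem h))).
Qed.
End pfm_integral.

Set Implicit Arguments.
Unset Strict Implicit.
Section pos_null.
Local Open Scope ereal_scope.
Context d (T : measurableType d) (R : realType) (mu : {measure set T -> \bar R}).

Lemma pos_null (A : set T) (f : T -> R) : measurable A ->
  measurable_fun A f -> (forall x, A x -> (0 < f x)%R) ->
  \int[mu]_(x in A) (f x)%:E <= 0 -> mu A = 0.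
Proof.
move=> mA mf fpos ile.
have i0 : \int[mu]_(x in A) (f x)%:E = 0.
  apply/eqP; rewrite eq_le ile /=; apply: integral_ge0 => x Ax.
  by rewrite lee_fin ltW // fpos.
have iabs : \int[mu]_(x in A) `|(f x)%:E| = 0.
  rewrite -i0; apply: eq_integral => x; rewrite inE => Ax.
  by rewrite gee0_abs // lee_fin ltW // fpos.
have mEf : measurable_fun A (EFin \o f) by exact/measurable_EFinP.
have := (ae_eq_integral_abs mu mA mEf).1 iabs.
move=> [N [mN N0 sN]].
apply/eqP; rewrite eq_le measure_ge0 andbT -N0.
apply: le_measure; rewrite ?inE //.
move=> x Ax; apply: sN => /= /(_ Ax) /eqP.
by rewrite eqe gt_eqF // fpos.
Qed.

End pos_null.

Definition clamp01 (R : realType) (x : R) : R := Num.min 1 (Num.max 0 x).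
Arguments clamp01 {R}.

Lemma clamp01_id (R : realType) (x : R) : (0 <= x <= 1)%R -> clamp01 x = x.
Proof. by case/andP => h0 h1; rewrite /clamp01 (max_idPr h0) (min_idPr h1). Qed.

Lemma clamp01_ge0 (R : realType) (x : R) : (0 <= clamp01 x)%R.
Proof. by rewrite /clamp01 le_min ler01 le_max lexx. Qed.

Lemma clamp01_le1 (R : realType) (x : R) : (clamp01 x <= 1)%R.
Proof. by rewrite /clamp01 ge_min lexx. Qed.

Lemma measurable_clamp01 (R : realType) : measurable_fun setT (@clamp01 R).
Proof.
apply: measurable_minr; first exact: measurable_cst.
apply: measurable_maxr; first exact: measurable_cst.
exact: measurable_id.
Qed.

Set Implicit Arguments.
Unset Strict Implicit.
Section helpers.
Context d (T : measurableType d) (R : realType).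

Lemma mlt (f g : T -> R) : measurable_fun setT f -> measurable_fun setT g ->
  measurable [set x | f x < g x].
Proof.
move=> mf mg.
have := measurable_fun_ltr mf mg measurableT (Y := [set true]) I.
by rewrite setTI.
Qed.

Lemma mpre d' (T' : measurableType d') (f : T -> T') (A : set T') :
  measurable_fun setT f -> measurable A -> measurable (f @^-1` A).
Proof. by move=> mf mA; rewrite -[X in measurable X]setTI; exact: mf. Qed.

Lemma ae_ex (mu : {measure set T -> \bar R}) (Q : T -> Prop) :
  {ae mu, forall x, Q x} -> exists N, [/\ measurable N, mu N = 0%E & ~` [set x | Q x] `<=` N].
Proof. by []. Qed.

End helpers.

Section versions.
Local Open Scope ereal_scope.
Context d (T : measurableType d) (R : realType) (P : probability T R).
Context (n : nat) (V : T -> CV R n) (mV : measurable_fun setT V).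

Lemma mphiV (phi : CV R n -> R) : measurable_fun setT phi ->
  measurable_fun setT (fun w => phi (V w)).
Proof. by move=> mphi; exact: (measurableT_comp mphi mV). Qed.

Lemma integrable01 (D : set T) (f : T -> R) : measurable D -> measurable_fun setT f ->
  (forall w, (0 <= f w <= 1)%R) -> P.-integrable D (EFin \o f).
Proof.
move=> mD mf hf; apply: (le_integrable mD (g := EFin \o cst 1%R)).
- by apply/measurable_EFinP; exact: measurable_funTS.
- move=> x _ /=; have /andP[h0 h1] := hf x.
  by rewrite lee_fin normr1 ger0_norm.
- exact: finite_measure_integrable_cst.
Qed.

Variables (F : set T) (mF : measurable F).

Section bounds.
Variables (phi : CV R n -> R) (mphi : measurable_fun setT phi).
Hypothesis hv : forall C : set (CV R n), measurable C ->
  P (F `&` V @^-1` C) = \int[P]_(w in V @^-1` C) (phi (V w))%:E.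

Let A0 := V @^-1` [set v | (phi v < 0)%R].
Let A1 := V @^-1` [set v | (1 < phi v)%R].
Let mA0 : measurable A0.
Proof. by apply: mpre => //; apply: mlt => //; exact: measurable_cst. Qed.
Let mA1 : measurable A1.
Proof. by apply: mpre => //; apply: mlt => //; exact: measurable_cst. Qed.

Lemma ver_A0 : P A0 = 0.
Proof.
apply: (pos_null (f := fun w => - phi (V w))%R) => //.
- by apply: measurable_funTS; apply: measurable_funN; exact: mphiV.
- by move=> w; rewrite /A0 /= oppr_gt0.
have h := hv (mlt mphi (measurable_cst (0%R : R))).
have e : \int[P]_(w in A0) (phi (V w))%:E = - \int[P]_(w in A0) (- phi (V w))%:E.
  rewrite -integral_ge0N; last first.
    by move=> w; rewrite /A0 /= => hw; rewrite lee_fin oppr_ge0 ltW.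
  by apply: eq_integral => w _; rewrite EFinN oppeK.
rewrite -oppe_ge0 -e -h; exact: measure_ge0.
Qed.

Lemma ver_A1 : P A1 = 0.
Proof.
apply: (pos_null (f := fun w => phi (V w) - 1)%R) => //.
- apply: measurable_funTS; apply: measurable_funB; first exact: mphiV.
  exact: measurable_cst.
- by move=> w; rewrite /A1 /= subr_gt0.
have h := hv (mlt (measurable_cst (1%R : R)) mphi).
have e : \int[P]_(w in A1) (phi (V w))%:E =
   \int[P]_(w in A1) (phi (V w) - 1)%:E + \int[P]_(w in A1) (cst 1 w).
  rewrite -ge0_integralD //.
  - by apply: eq_integral => w _ /=; rewrite -EFinD subrK.
  - by move=> w; rewrite /A1 /= => hw; rewrite lee_fin subr_ge0 ltW.
  - apply/measurable_EFinP; apply: measurable_funTS; apply: measurable_funB.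
      exact: mphiV.
    exact: measurable_cst.
rewrite integral_cst // mul1e -h in e.
have fin : P A1 \is a fin_num by rewrite fin_num_measure.
have le : P (F `&` A1) <= P A1.
  by apply: le_measure; rewrite ?inE //; first exact: measurableI; exact: subIsetr.
rewrite e in le.
by move: le; rewrite -[X in _ <= X](add0e (P A1)) leeD2rE.
Qed.

Lemma ver_ae : {ae P, forall w, phi (V w) = clamp01 (phi (V w))}.
Proof.
exists (A0 `|` A1); split.
- exact: measurableU.
- by rewrite (measureU0 mA0 mA1 ver_A1); exact: ver_A0.
- move=> w /= hneq.
  case: (ltP (phi (V w)) 0%R) => [h|h0]; first by left.
  case: (ltP 1%R (phi (V w))) => [h|h1]; first by right.
  by exfalso; apply: hneq; rewrite clamp01_id // h0 h1.
Qed.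

Lemma ver_clamp C : measurable C ->
  P (F `&` V @^-1` C) = \int[P]_(w in V @^-1` C) (clamp01 (phi (V w)))%:E.
Proof.
move=> mC; rewrite hv //; apply: ae_eq_integral.
- exact: mpre.
- by apply/measurable_EFinP; apply: measurable_funTS; exact: mphiV.
- apply/measurable_EFinP; apply: measurable_funTS.
  by apply: (@measurableT_comp _ _ _ _ _ _ (@clamp01 R)); [exact: measurable_clamp01 | exact: mphiV].
- have [N [mN N0 sN]] := ae_ex ver_ae; exists N; split => // w /= hw; apply: sN => /= e.
  exact: (hw (fun _ => congr1 EFin e)).
Qed.

End bounds.

Lemma ver_uniq (phi1 phi2 : CV R n -> R) :
  measurable_fun setT phi1 -> measurable_fun setT phi2 ->
  (forall v, (0 <= phi1 v <= 1)%R) -> (forall v, (0 <= phi2 v <= 1)%R) ->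
  (forall C : set (CV R n), measurable C ->
     \int[P]_(w in V @^-1` C) (phi1 (V w))%:E = \int[P]_(w in V @^-1` C) (phi2 (V w))%:E) ->
  {ae P, forall w, phi1 (V w) = phi2 (V w)}.
Proof.
move=> m1 m2 b1 b2 h.
have key (f g : CV R n -> R) : measurable_fun setT f -> measurable_fun setT g ->
   (forall v, (0 <= f v <= 1)%R) -> (forall v, (0 <= g v <= 1)%R) ->
   (forall C : set (CV R n), measurable C ->
     \int[P]_(w in V @^-1` C) (f (V w))%:E = \int[P]_(w in V @^-1` C) (g (V w))%:E) ->
   P (V @^-1` [set v | (g v < f v)%R]) = 0.
  move=> mf mg bf bg hfg.
  have mC : measurable [set v | (g v < f v)%R] by exact: mlt.
  apply: (pos_null (f := fun w => f (V w) - g (V w))%R).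
  - exact: mpre.
  - by apply: measurable_funTS; apply: measurable_funB; exact: mphiV.
  - by move=> w; rewrite /= subr_gt0.
  have mA : measurable (V @^-1` [set v | (g v < f v)%R]) by exact: mpre.
  have igf : P.-integrable (V @^-1` [set v | (g v < f v)%R]) (EFin \o (fun w => f (V w))).
    by apply: integrable01 => //; exact: mphiV.
  have igg : P.-integrable (V @^-1` [set v | (g v < f v)%R]) (EFin \o (fun w => g (V w))).
    by apply: integrable01 => //; exact: mphiV.
  under eq_integral do rewrite EFinB.
  rewrite (integralB_EFin mA igf igg) hfg // subee //.
  exact: (integrable_fin_num mA igg).
have N1 := key _ _ m1 m2 b1 b2 h.
have N2 := key _ _ m2 m1 b2 b1 (fun C mC => esym (h C mC)).
exists (V @^-1` [set v | (phi2 v < phi1 v)%R] `|` V @^-1` [set v | (phi1 v < phi2 v)%R]); split.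
- by apply: measurableU; apply: mpre => //; exact: mlt.
- by rewrite measureU0 //; apply: mpre => //; exact: mlt.
- move=> w /= hneq.
  case: (ltgtP (phi1 (V w)) (phi2 (V w))) => [hl|hg|he]; [by right|by left|by []].
Qed.

End versions.

Set Implicit Arguments.
Unset Strict Implicit.

Section restr_integral.
Local Open Scope ereal_scope.
Context d (T : measurableType d) (R : realType) (P : probability T R).

Lemma ae_sub (mu : {measure set T -> \bar R}) (Q : T -> Prop) (A : set T) :
  {ae mu, forall x, Q x} -> {ae mu, forall x, A x -> Q x}.
Proof.
move=> /ae_ex [N [mN N0 sN]]; exists N; split => // x /= hx; apply: sN => /= qx.
by apply: hx => _.
Qed.

Lemma integral_restr (E : set T) (mE : measurable E) (A : set T) (mA : measurable A)
  (eta : T -> R) : measurable_fun setT eta -> (forall x, (0 <= eta x <= 1)%R) ->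
  \int[mrestr P mE]_(x in A) (eta x)%:E = \int[P]_(x in A `&` E) (eta x)%:E.
Proof.
move=> meta eta01.
have nuP : mrestr P mE `<< P.
  apply/null_content_dominatesP => F mF PF0; apply/eqP; rewrite eq_le measure_ge0 andbT -PF0 /mrestr.
  by apply: le_measure; rewrite ?inE //; first exact: measurableI; exact: subIsetl.
have int : (mrestr P mE).-integrable A (EFin \o eta).
  apply: (le_integrable mA (g := EFin \o cst 1%R)).
  - by apply/measurable_EFinP; exact: measurable_funTS.
  - move=> x _ /=; have /andP[h0 h1] := eta01 x.
    by rewrite lee_fin normr1 ger0_norm.
  - exact: finite_measure_integrable_cst.
rewrite -(Radon_Nikodym_change_of_variables nuP mA int).
set RN := Radon_Nikodym _ _.
have RNae : ae_eq P setT RN (EFin \o \1_E).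
  apply: integral_ae_eq => //.
  - exact: Radon_Nikodym_integrable.
  - apply/measurable_EFinP; exact: measurable_indic.
  - move=> F _ mF; rewrite /RN -Radon_Nikodym_integral //.
    by rewrite integral_indic //= /mrestr setIC.
rewrite __deprecated__integral_setI_indic //.
apply: ae_eq_integral => //.
- apply: emeasurable_funM.
    by apply/measurable_EFinP; exact: measurable_funTS.
  apply: measurable_funTS; apply: (measurable_int P).
  exact: Radon_Nikodym_integrable.
- apply: emeasurable_funM.
    by apply/measurable_EFinP; exact: measurable_funTS.
  by apply/measurable_EFinP; apply: measurable_funTS; exact: measurable_indic.
- apply: ae_eqe_mul2l.
  move: RNae => /ae_ex [N [mN N0 sN]]; exists N; split => // x /= hx; apply: sN => /= h.
  by apply: hx => _; apply: h.
Qed.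

End restr_integral.

Section mx.
Variables (R : realType) (d K : nat) (B : 'M[R]_(d, K)) (lambda : 'I_K -> R).
Hypothesis hBB : B^T *m B = diag_mx (\row_i lambda i).
Hypothesis hpos : forall i, 0 < lambda i.

Definition Dm := diag_mx (\row_i (Num.sqrt (lambda i))^-1).

Lemma DmDm : Dm *m Dm = diag_mx (\row_i (lambda i)^-1).
Proof.
rewrite /Dm mulmx_diag; congr diag_mx; apply/rowP => i; rewrite !mxE.
by rewrite -invfM -expr2 sqr_sqrtr // ltW.
Qed.

Lemma LamDD : diag_mx (\row_i lambda i) *m diag_mx (\row_i (lambda i)^-1) = 1%:M.
Proof.
rewrite mulmx_diag; apply/matrixP => i j; rewrite !mxE.
case: (i == j); rewrite ?mulr1n ?mulr0n //.
by rewrite mulfV // gt_eqF.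
Qed.

Lemma BBunit : B^T *m B \in unitmx.
Proof. by rewrite hBB; exact: (mulmx1_unit LamDD).1. Qed.

Lemma invBB : invmx (B^T *m B) = Dm *m Dm.
Proof.
rewrite DmDm.
rewrite -[RHS]mul1mx -(mulVmx BBunit) -mulmxA [X in _ *m (X *m _)]hBB LamDD.
by rewrite mulmx1.
Qed.

Lemma QB0 : (1%:M - B *m invmx (B^T *m B) *m B^T) *m B = 0.
Proof.
by rewrite mulmxBl mul1mx -!mulmxA (mulVmx BBunit) mulmx1 subrr.
Qed.

Lemma Ut_eq : (B *m Dm)^T = Dm *m B^T.
Proof. by rewrite trmx_mul /Dm tr_diag_mx. Qed.

Lemma decomp (x : 'cV[R]_d) :
  (B *m Dm) *m ((B *m Dm)^T *m x) + (1%:M - B *m invmx (B^T *m B) *m B^T) *m x = x.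
Proof.
rewrite Ut_eq invBB mulmxBl mul1mx !mulmxA.
by rewrite addrC subrK.
Qed.

Lemma Vdecomp (z : 'cV[R]_K) (y : 'cV[R]_d) :
  (B *m Dm)^T *m (B *m z + y) = ((B *m Dm)^T *m B) *m z + Dm *m (B^T *m y).
Proof. by rewrite mulmxDr mulmxA Ut_eq mulmxA. Qed.

Lemma QX (z : 'cV[R]_K) (y : 'cV[R]_d) :
  (1%:M - B *m invmx (B^T *m B) *m B^T) *m (B *m z + y) =
  (1%:M - B *m invmx (B^T *m B) *m B^T) *m y.
Proof. by rewrite mulmxDr mulmxA QB0 mul0mx add0r. Qed.

End mx.

Set Implicit Arguments.
Unset Strict Implicit.

Section aux.
Context d (T : measurableType d) (R : realType).

Lemma ae_and (mu : {measure set T -> \bar R}) (A B : T -> Prop) :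
  {ae mu, forall x, A x} -> {ae mu, forall x, B x} -> {ae mu, forall x, A x /\ B x}.
Proof.
move=> /ae_ex [N1 [m1 N10 s1]] /ae_ex [N2 [m2 N20 s2]].
exists (N1 `|` N2); split; first exact: measurableU.
  by rewrite measureU0.
move=> x /= /not_andP [h|h]; [left; apply: s1 | right; apply: s2]; exact: h.
Qed.

Lemma ae_mono (mu : {measure set T -> \bar R}) (A B : T -> Prop) :
  {ae mu, forall x, A x} -> (forall x, A x -> B x) -> {ae mu, forall x, B x}.
Proof.
move=> /ae_ex [N [mN N0 sN]] AB; exists N; split => // x /= hB; apply: sN => /= hA.
by apply: hB; exact: AB.
Qed.

Lemma cpv_meas (P : probability T R) n (V : T -> 'cV[R]_n) F (g : 'cV[R]_n -> R) :
  cond_prob_version P V F g -> measurable_fun setT (g : CV R n -> R).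
Proof. by move=> [hg _] _ A mA; rewrite setTI; exact: hg. Qed.

End aux.

Section model.
Variables (R : realType) (dT : measure_display) (T : measurableType dT).
Variables (P : probability T R) (K d : nat) (B : 'M[R]_(d, K)) (lambda : 'I_K -> R).
Variables (Z : T -> 'cV[R]_K) (Y : T -> R) (e : T -> 'cV[R]_d).
Hypothesis hBB : B^T *m B = diag_mx (\row_i lambda i).
Hypothesis hpos : forall i, 0 < lambda i.
Hypotheses (hZ : rvec Z) (hY : measurable_fun setT Y) (he : rvec e).

Definition Ut := (B *m Dm lambda)^T.
Definition Qm := 1%:M - B *m invmx (B^T *m B) *m B^T.
Definition Xf := fun w => B *m Z w + e w.
Definition Vf := fun w => Ut *m Xf w.
Definition Wf := fun w => Qm *m e w.
Definition Bef := fun w => B^T *m e w.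

Hypothesis hM : forall (C : set 'cV[R]_K) (F : set 'cV[R]_d), cborel C -> cborel F ->
  P (Z @^-1` C `&` e @^-1` F) = (P (Z @^-1` C) * P (e @^-1` F))%E.
Hypothesis hP : indep2 P (fun w => Qm *m e w) (fun w => B^T *m e w).

Lemma mZ : measurable_fun setT (Z : T -> CV R K).
Proof. exact: (rvec_meas P hZ). Qed.
Lemma me : measurable_fun setT (e : T -> CV R d).
Proof. exact: (rvec_meas P he). Qed.
Lemma mX : measurable_fun setT (Xf : T -> CV R d).
Proof. by apply: mcv_add; [exact: mcv_lin mZ | exact: me]. Qed.
Lemma mV : measurable_fun setT (Vf : T -> CV R K).
Proof. exact: mcv_lin mX. Qed.
Lemma mW : measurable_fun setT (Wf : T -> CV R d).
Proof. exact: mcv_lin me. Qed.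
Lemma mBe : measurable_fun setT (Bef : T -> CV R K).
Proof. exact: mcv_lin me. Qed.

Lemma Pfin (A : set T) : measurable A -> P A = (fine (P A))%:E.
Proof. by move=> mA; rewrite fineK // fin_num_measure. Qed.

Lemma fine_ge0P (A : set T) : (0 <= fine (P A))%R.
Proof. by apply: fine_ge0; exact: measure_ge0. Qed.

Lemma I3 (C D : set 'cV[R]_K) (E : set 'cV[R]_d) : cborel C -> cborel D -> cborel E ->
  P (Z @^-1` C `&` Vf @^-1` D `&` Wf @^-1` E) =
  (P (Z @^-1` C `&` Vf @^-1` D) * P (Wf @^-1` E))%E.
Proof.
move=> mC mD mE.
have mWE : measurable (Wf @^-1` E) by exact: mpre mW mE.
pose zeta := fun w => ((Z w : CV R K), (Bef w : CV R K)).
have mzeta : measurable_fun setT zeta by exact: measurable_fun_pair mZ mBe.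
pose c := fine (P (Wf @^-1` E)).
have Pc : P (Wf @^-1` E) = c%:E by exact: Pfin.
pose m1 := pfm (mrestr P mWE) mzeta.
pose cn : {nonneg R} := NngNum (fine_ge0P (Wf @^-1` E)).
have cnE : cn%:num = c by [].
pose m2 := mscale cn (pfm P mzeta).
pose G := [set A `*` B' | A in @measurable _ (CV R K) & B' in @measurable _ (CV R K)].
have key : forall S, measurable S -> m1 S = m2 S.
  move=> S mS; apply: (measure_unique G (fun _ => setT) _ _ _ _ m1 m2 _ _ S mS).
  - exact: measurable_prod_measurableType.
  - move=> _ _ [A1 mA1 [B1 mB1 <-]] [A2 mA2 [B2 mB2 <-]].
    exists (A1 `&` A2); first exact: measurableI.
    by exists (B1 `&` B2); [exact: measurableI | rewrite setXI].
  - by move=> _; exists setT => //; exists setT => //; rewrite setXTT.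
  - by rewrite bigcup_const.
  - move=> _ [A mA [B' mB' <-]].
    rewrite /m1 /m2 /=; unfold mscale; rewrite /= /pfm /pushforward /mrestr /= cnE.
    have e1 : zeta @^-1` (A `*` B') `&` Wf @^-1` E =
        Z @^-1` A `&` e @^-1` ((fun x => B^T *m x) @^-1` B' `&` (fun x => Qm *m x) @^-1` E).
      by rewrite -setIA.
    have e2 : zeta @^-1` (A `*` B') = Z @^-1` A `&` e @^-1` ((fun x => B^T *m x) @^-1` B').
      by [].
    have mB'' : cborel ((fun x : 'cV[R]_d => B^T *m x) @^-1` B') by exact: cborel_lin.
    have mE' : cborel ((fun x : 'cV[R]_d => Qm *m x) @^-1` E) by exact: cborel_lin.
    rewrite e1 e2 !hM //; last first.
      exact: (@measurableI _ (CV R d)).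
    have e3 : e @^-1` ((fun x => B^T *m x) @^-1` B' `&` (fun x => Qm *m x) @^-1` E) =
        (fun w => Qm *m e w) @^-1` E `&` (fun w => B^T *m e w) @^-1` B'.
      by rewrite setIC.
    rewrite e3 hP // -/Wf Pc.
    have -> : e @^-1` ((fun x => B^T *m x) @^-1` B') = (fun w => B^T *m e w) @^-1` B' by [].
    by rewrite muleCA.
  - by move=> _; have /fin_numPlt/andP[_ ->] := fin_num_measure m1 setT measurableT.
pose phi := fun p : CV R K * CV R K => ((Ut *m B) *m p.1 + Dm lambda *m p.2 : CV R K).
have mphi : measurable_fun setT phi.
  apply: mcv_add; first exact: (mcv_lin _ measurable_fst).
  exact: (mcv_lin _ measurable_snd).
pose S : set (CV R K * CV R K) := (@fst (CV R K) (CV R K)) @^-1` C `&` phi @^-1` D.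
have mS : measurable S.
  apply: measurableI; first by apply: mpre; [exact: measurable_fst | exact: mC].
  by apply: mpre; [exact: mphi | exact: mD].
have := key _ mS.
rewrite /m1 /m2 /=; unfold mscale; rewrite /= /pfm /pushforward /mrestr /= cnE.
have -> : zeta @^-1` S = Z @^-1` C `&` Vf @^-1` D.
  by apply/seteqP; split => w /=; rewrite /phi /Vf /Xf /Ut /Bef /= Vdecomp.
by move=> ->; rewrite Pc muleC.
Qed.

Lemma WQX w : Qm *m Xf w = Wf w.
Proof. by rewrite /Xf /Wf /Qm (QX hBB hpos). Qed.

Lemma XG (D : set 'cV[R]_K) (E : set 'cV[R]_d) :
  Xf @^-1` ((fun x => Ut *m x) @^-1` D `&` (fun x => Qm *m x) @^-1` E) =
  Vf @^-1` D `&` Wf @^-1` E.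
Proof. by apply/seteqP; split => w /=; rewrite WQX. Qed.

Lemma Xdecomp w : (B *m Dm lambda) *m Vf w + Wf w = Xf w.
Proof. by rewrite -WQX /Vf /Ut /Qm (decomp hBB hpos). Qed.

End model.

Set Implicit Arguments.
Unset Strict Implicit.

Section model2.
Variables (R : realType) (dT : measure_display) (T : measurableType dT).
Variables (P : probability T R) (K d : nat) (B : 'M[R]_(d, K)) (lambda : 'I_K -> R).
Variables (Z : T -> 'cV[R]_K) (Y : T -> R) (e : T -> 'cV[R]_d).
Hypothesis hBB : B^T *m B = diag_mx (\row_i lambda i).
Hypothesis hpos : forall i, 0 < lambda i.
Hypotheses (hZ : rvec Z) (hY : measurable_fun setT Y) (he : rvec e).
Local Notation Ut := (Ut B lambda).
Local Notation Qm := (Qm B).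
Local Notation Xf := (Xf B Z e).
Local Notation Vf := (Vf B lambda Z e).
Local Notation Wf := (Wf B e).
Local Notation Y1 := (Y @^-1` [set 1%R]).

Hypothesis hM : forall (C : set 'cV[R]_K) (F : set 'cV[R]_d), cborel C -> cborel F ->
  P (Z @^-1` C `&` e @^-1` F) = (P (Z @^-1` C) * P (e @^-1` F))%E.
Hypothesis hP : indep2 P (fun w => Qm *m e w) (fun w => B^T *m e w).

Lemma mY1 : measurable Y1.
Proof. by apply: mpre => //; exact: measurable_set1. Qed.

Lemma stepA : exists eta : CV R K -> R, measurable_fun setT eta /\
  (forall v, (0 <= eta v <= 1)%R) /\
  forall D : set (CV R K), measurable D ->
   P (Y1 `&` Vf @^-1` D) = (\int[P]_(w in Vf @^-1` D) (eta (Vf w))%:E)%E.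
Proof.
have mV' := mV P B lambda hZ he.
pose mu := pfm P mV'.
pose nu := pfm (mrestr P mY1) mV'.
have numu : nu `<< mu.
  apply/null_content_dominatesP => A mA mu0; apply/eqP.
  rewrite eq_le measure_ge0 andbT -mu0 /nu /mu /= /pfm /pushforward /mrestr.
  apply: le_measure; rewrite ?inE; first exact: measurableI (mpre mV' mA) mY1.
    exact: mpre mV' mA.
  exact: subIsetl.
have numu' : charge_of_finite_measure nu `<< mu := numu.
pose f := Radon_Nikodym (charge_of_finite_measure nu) mu.
have fin x : f x \is a fin_num := Radon_Nikodym_fin_num x numu'.
have intf : mu.-integrable setT f := Radon_Nikodym_integrable numu'.
have mf : measurable_fun setT f := measurable_int _ intf.
pose phi := fun v => fine (f v).
have fE : forall v, f v = (phi v)%:E by move=> v; rewrite fineK.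
have mphi : measurable_fun setT phi.
  by apply: (measurableT_comp (f := fine)) => //; exact: fine_measurable.
have hv : forall C : set (CV R K), measurable C ->
    P (Y1 `&` Vf @^-1` C) = (\int[P]_(w in Vf @^-1` C) (phi (Vf w))%:E)%E.
  move=> C mC.
  transitivity (charge_of_finite_measure nu C).
    by rewrite /charge_of_finite_measure /nu /= /pfm /pushforward /mrestr setIC.
  rewrite (Radon_Nikodym_integral numu' mC) -/f.
  under eq_integral do rewrite fE.
  have mEphi : measurable_fun setT (EFin \o phi) by exact/measurable_EFinP.
  have intg : P.-integrable (Vf @^-1` C) ((EFin \o phi) \o Vf).
    apply/integrableP; split.
      apply: measurable_funTS; apply: measurableT_comp => //.
    have := integrableS measurableT mC (@subsetT _ C) intf.
    move=> /integrableP [_ H].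
    rewrite -(@pfm_integral _ _ _ _ _ P _ mV' C (fun y => `|(phi y)%:E|)%E) //.
    - by move: H; under eq_integral do rewrite fE.
    - by apply: measurable_funTS; apply: measurableT_comp => //.
  exact: (integral_pushforward mV' mEphi intg mC).
exists (fun v => clamp01 (phi v)); split.
  by apply: measurableT_comp => //; exact: measurable_clamp01.
split; first by move=> v; rewrite clamp01_ge0 clamp01_le1.
move=> D mD; exact: (ver_clamp mV' mY1 mphi hv mD).
Qed.


Hypothesis hCI : forall G : set 'cV[R]_d, cborel G -> exists g h : 'cV[R]_K -> R,
  cond_prob_version P Z Y1 g /\ cond_prob_version P Z (Xf @^-1` G) h /\
  forall C, cborel C -> P (Y1 `&` Xf @^-1` G `&` Z @^-1` C) =
    (\int[P]_(w in Z @^-1` C) (g (Z w) * h (Z w))%:E)%E.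

Lemma B1 (D : set 'cV[R]_K) (E : set 'cV[R]_d) : cborel D -> cborel E ->
  P (Y1 `&` (Vf @^-1` D `&` Wf @^-1` E)) = (P (Y1 `&` Vf @^-1` D) * P (Wf @^-1` E))%E.
Proof.
move=> mD mE.
have mZ' := mZ P hZ.
have mX' := mX P B hZ he.
pose c := fine (P (Wf @^-1` E)).
have Pc : P (Wf @^-1` E) = c%:E by apply: Pfin; exact: mpre (mW P B he) mE.
have c0 : (0 <= c)%R by exact: fine_ge0P.
have c1 : (c <= 1)%R.
  by rewrite -lee_fin -Pc; apply: probability_le1; exact: mpre (mW P B he) mE.
pose G := (fun x => Ut *m x) @^-1` D `&` (fun x => Qm *m x) @^-1` E.
pose G' := (fun x => Ut *m x) @^-1` D.
have hG' : cborel G' by exact: cborel_lin.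
have hG : cborel G.
  apply: (@measurableI _ (CV R d)); first exact: cborel_lin.
  exact: cborel_lin.
have XGE : Xf @^-1` G = Vf @^-1` D `&` Wf @^-1` E by exact: XG.
have mXG : measurable (Xf @^-1` G) by exact: mpre mX' hG.
have mXG' : measurable (Xf @^-1` G') by exact: mpre mX' hG'.
have [g [h [cg [ch hgh]]]] := hCI hG.
have [g' [h' [cg' [ch' hgh']]]] := hCI hG'.
have mg := cpv_meas cg. have mh := cpv_meas ch.
have mg' := cpv_meas cg'. have mh' := cpv_meas ch'.
have mc (k : CV R K -> R) : measurable_fun setT k -> measurable_fun setT (fun v => clamp01 (k v)).
  by move=> mk; apply: measurableT_comp => //; exact: measurable_clamp01.
have bc (k : CV R K -> R) v : (0 <= clamp01 (k v) <= 1)%R.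
  by rewrite clamp01_ge0 clamp01_le1.
have ae1 := ver_ae mZ' mY1 mg cg.2.
have ae2 := ver_ae mZ' mXG mh ch.2.
have ae3 := ver_ae mZ' mY1 mg' cg'.2.
have ae4 := ver_ae mZ' mXG' mh' ch'.2.
have ae5 : {ae P, forall w, clamp01 (g (Z w)) = clamp01 (g' (Z w))}.
  apply: (ver_uniq mZ' (mc _ mg) (mc _ mg') (bc g) (bc g')) => C mC.
  by rewrite -(ver_clamp mZ' mY1 mg cg.2 mC) -(ver_clamp mZ' mY1 mg' cg'.2 mC).
have ae6 : {ae P, forall w, clamp01 (h (Z w)) = c * clamp01 (h' (Z w))}.
  apply: (ver_uniq mZ' (phi2 := fun v => c * clamp01 (h' v)) (mc _ mh)).
  - apply: measurable_funM; first exact: measurable_cst.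
    exact: (mc _ mh').
  - exact: bc.
  - move=> v; have /andP[a b] := bc h' v; rewrite mulr_ge0 //=.
    by rewrite mulr_ile1.
  move=> C mC.
  rewrite -(ver_clamp mZ' mXG mh ch.2 mC).
  under eq_integral do rewrite EFinM.
  rewrite integralZl; last 2 first.
  - exact: mpre mZ' mC.
  - apply: integrable01; first exact: mpre mZ' mC.
      exact: (measurableT_comp (mc _ mh') mZ').
    by move=> w; exact: bc.
  rewrite -(ver_clamp mZ' mXG' mh' ch'.2 mC).
  have e1 : Xf @^-1` G `&` Z @^-1` C = Z @^-1` C `&` Vf @^-1` D `&` Wf @^-1` E.
    by rewrite XGE setIC setIA.
  have e2 : Xf @^-1` G' `&` Z @^-1` C = Z @^-1` C `&` Vf @^-1` D.
    by rewrite setIC.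
  rewrite e1 e2 (I3 lambda hZ he hM hP mC mD mE) Pc.
  by rewrite muleC.
have aeall := ae_and ae1 (ae_and ae2 (ae_and ae3 (ae_and ae4 (ae_and ae5 ae6)))).
have mprod (k1 k2 : CV R K -> R) : measurable_fun setT k1 -> measurable_fun setT k2 ->
    measurable_fun setT (fun w => (k1 (Z w) * k2 (Z w))%:E).
  move=> m1 m2; apply/measurable_EFinP; apply: measurable_funM.
    exact: measurableT_comp m1 mZ'.
  exact: measurableT_comp m2 mZ'.
have I1 : (\int[P]_(w in setT) (g (Z w) * h (Z w))%:E)%E =
    (c%:E * \int[P]_(w in setT) (clamp01 (g' (Z w)) * clamp01 (h' (Z w)))%:E)%E.
  rewrite -integralZl //; last first.
    apply: integrable01 => //.
      by apply: measurable_funM; [exact: (measurableT_comp (mc _ mg') mZ') | exact: (measurableT_comp (mc _ mh') mZ')].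
    move=> w; have /andP[a b] := bc g' (Z w); have /andP[a' b'] := bc h' (Z w).
    by rewrite mulr_ge0 //= mulr_ile1.
  apply: ae_eq_integral => //.
  - exact: mprod.
  - under eq_fun do rewrite -EFinM.
    apply/measurable_EFinP; apply: measurable_funM; first exact: measurable_cst.
    by apply: measurable_funM; [exact: (measurableT_comp (mc _ mg') mZ') | exact: (measurableT_comp (mc _ mh') mZ')].
  apply: (ae_mono aeall) => w [h1 [h2 [h3 [h4 [h5 h6]]]]] _.
  by rewrite h1 h2 h6 h5 -EFinM; congr EFin; rewrite mulrCA.
have I2 : (\int[P]_(w in setT) (g' (Z w) * h' (Z w))%:E)%E =
    (\int[P]_(w in setT) (clamp01 (g' (Z w)) * clamp01 (h' (Z w)))%:E)%E.
  apply: ae_eq_integral => //.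
  - exact: (mprod _ _ mg' mh').
  - exact: (mprod _ _ (mc _ mg') (mc _ mh')).
  apply: (ae_mono aeall) => w [h1 [h2 [h3 [h4 [h5 h6]]]]] _.
  by rewrite {1}h3 {1}h4.
have := hgh _ (@measurableT _ (CV R K)).
have := hgh' _ (@measurableT _ (CV R K)).
rewrite !preimage_setT !setIT => e2 e1.
rewrite -XGE e1 I1 -I2 -e2 Pc.
by rewrite muleC.
Qed.

Lemma B2 (eta : CV R K -> R) : measurable_fun setT eta -> (forall v, (0 <= eta v <= 1)%R) ->
  forall (D : set (CV R K)) (E : set 'cV[R]_d), measurable D -> cborel E ->
  (\int[P]_(w in Vf @^-1` D `&` Wf @^-1` E) (eta (Vf w))%:E)%E =
  (P (Wf @^-1` E) * \int[P]_(w in Vf @^-1` D) (eta (Vf w))%:E)%E.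
Proof.
move=> meta b01 D E mD mE.
have mV' := mV P B lambda hZ he.
have mWE : measurable (Wf @^-1` E) by exact: mpre (mW P B he) mE.
have mVD : measurable (Vf @^-1` D) by exact: mpre mV' mD.
have metaV : measurable_fun setT (fun w => eta (Vf w)) by exact: measurableT_comp meta mV'.
pose c := fine (P (Wf @^-1` E)).
have Pc : P (Wf @^-1` E) = c%:E by exact: Pfin.
pose cn : {nonneg R} := NngNum (fine_ge0P P (Wf @^-1` E)).
have cnE : cn%:num = c by [].
have mEeta : measurable_fun D (EFin \o eta) by apply/measurable_EFinP; exact: measurable_funTS.
have eta0 : forall y, D y -> (0 <= (EFin \o eta) y)%E.
  by move=> y _; rewrite /= lee_fin; case/andP: (b01 y).
rewrite -(integral_restr P mWE mVD metaV (fun w => b01 (Vf w))).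
rewrite -(@pfm_integral _ _ _ _ _ (mrestr P mWE) _ mV' D (EFin \o eta) mD mEeta eta0).
rewrite (eq_measure_integral (mscale cn (pfm P mV'))); last first.
  move=> A mA _; rewrite /=; unfold mscale; rewrite /= /pfm /pushforward /mrestr cnE -Pc.
  have := I3 lambda hZ he hM hP (@measurableT _ (CV R K)) mA mE.
  by rewrite !preimage_setT !setTI muleC.
rewrite ge0_integral_mscale // cnE -Pc.
by rewrite (@pfm_integral _ _ _ _ _ P _ mV' D (EFin \o eta) mD mEeta eta0).
Qed.

Lemma final_main : exists eta : CV R K -> R, measurable_fun setT eta /\
  (forall v, (0 <= eta v <= 1)%R) /\
  forall C : set 'cV[R]_d, cborel C ->
    P (Y1 `&` Xf @^-1` C) = (\int[P]_(w in Xf @^-1` C) (eta (Ut *m Xf w))%:E)%E.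
Proof.
have [eta [meta [b01 hA]]] := stepA.
exists eta; split => //; split => // C mC.
have mV' := mV P B lambda hZ he.
have mW' := mW P B he.
pose xi := fun w => ((Vf w : CV R K), (Wf w : CV R d)).
have mxi : measurable_fun setT xi by exact: measurable_fun_pair mV' mW'.
pose etaV := fun w => (eta (Vf w))%:E.
have metaV : measurable_fun setT etaV.
  by apply/measurable_EFinP; exact: measurableT_comp meta mV'.
have etaV0 : forall w, (0 <= etaV w)%E.
  by move=> w; rewrite /etaV lee_fin; case/andP: (b01 (Vf w)).
pose m1 := pfm (mrestr P mY1) mxi.
pose m2 := pfm (dens P metaV etaV0) mxi.
pose G := [set A `*` B' | A in @measurable _ (CV R K) & B' in @measurable _ (CV R d)].
have key : forall S, measurable S -> m1 S = m2 S.
  move=> S mS; apply: (measure_unique G (fun _ => setT) _ _ _ _ m1 m2 _ _ S mS).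
  - exact: measurable_prod_measurableType.
  - move=> _ _ [A1 mA1 [B1 mB1 <-]] [A2 mA2 [B2 mB2 <-]].
    exists (A1 `&` A2); first exact: measurableI.
    by exists (B1 `&` B2); [exact: measurableI | rewrite setXI].
  - by move=> _; exists setT => //; exists setT => //; rewrite setXTT.
  - by rewrite bigcup_const.
  - move=> _ [A mA [E mE <-]].
    rewrite /m1 /m2 /= /pfm /pushforward /mrestr /dens /=.
    have -> : xi @^-1` (A `*` E) = Vf @^-1` A `&` Wf @^-1` E by [].
    rewrite setIC (B1 mA mE) (hA _ mA) (B2 meta b01 mA mE).
    by rewrite muleC.
  - by move=> _; have /fin_numPlt/andP[_ ->] := fin_num_measure m1 setT measurableT.
pose S : set (CV R K * CV R d) := [set p | C ((B *m Dm lambda) *m p.1 + p.2)].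
have mS : measurable S.
  have mf : measurable_fun setT (fun p : CV R K * CV R d => ((B *m Dm lambda) *m p.1 + p.2 : CV R d)).
    apply: mcv_add; first exact: (mcv_lin _ measurable_fst).
    exact: measurable_snd.
  exact: (mpre mf mC).
have := key _ mS.
rewrite /m1 /m2 /= /pfm /pushforward /mrestr /dens /=.
have -> : xi @^-1` S = Xf @^-1` C.
  by apply/seteqP; split => w /=; rewrite /S /xi /= (Xdecomp Z e hBB hpos).
by rewrite setIC.
Qed.

End model2.

Set Implicit Arguments.
Unset Strict Implicit.

Lemma bigcap_sel (R : realType) (T : Type) (m d : nat) (A : 'I_m -> T -> 'cV[R]_d)
  (j : 'I_m) (F : set 'cV[R]_d) :
  \bigcap_(j' in [set: 'I_m]) (A j' @^-1` (if j' == j then F else setT)) = A j @^-1` F.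
Proof.
apply/seteqP; split => w /=.
  by move=> /(_ j I); rewrite eqxx.
move=> Fw j' _; case: eqP => [->|_] //.
Qed.

Unset Implicit Arguments.

Theorem proposition1 (R : realType) (dT : measure_display) (T : measurableType dT)
  (P : probability T R) (K d m : nat)
  (B : 'M[R]_(d, K)) (lambda : 'I_K -> R)
  (Z : T -> 'cV[R]_K) (Y : T -> R)
  (eps : 'I_m -> T -> 'cV[R]_d) (X : 'I_m -> T -> 'cV[R]_d)
  (* latent vector and label *)
  (hZ : rvec Z) (hY : measurable_fun setT Y)
  (hYval : forall w, Y w = 1 \/ Y w = -1)
  (* the conditional distribution of Z given Y = y has a density *)
  (hZdens : forall (y : R) (N : set 'cV[R]_K), cborel N -> lebesgue_null N ->
      P (Z @^-1` N `&` Y @^-1` [set y]) = 0%E)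
  (* Var(Z) = I_K *)
  (hZint : forall i, P.-integrable setT (fun w => (Z w i ord0)%:E))
  (hZint2 : forall i, P.-integrable setT (fun w => ((Z w i ord0) ^+ 2)%:E))
  (hZvar : forall i j, covariance P (fun w => Z w i ord0) (fun w => Z w j ord0)
                       = ((i == j)%:R)%:E)
  (* factor form of the views *)
  (hX : forall j w, X j w = B *m Z w + eps j w)
  (heps : forall j, rvec (eps j))
  (heps_dens : forall j, has_density P (eps j))
  (heps_int : forall j i, P.-integrable setT (fun w => (eps j w i ord0)%:E))
  (heps_mean : forall j i, 'E_P[fun w => eps j w i ord0]%E = 0%E)
  (* noise independent of Z and across views *)
  (hindep : mutual_indep P Z eps)
  (* Y conditionally independent of the views given Z *)
  (hcond : cond_indep P Y X Z)
  (* B^T B = Lambda = diag(lambda_1 >= ... >= lambda_K > 0) *)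
  (hBB : B^T *m B = diag_mx (\row_i lambda i))
  (hlam_pos : forall i, 0 < lambda i)
  (hlam_dec : forall i j : 'I_K, (i <= j)%N -> lambda j <= lambda i)
  (* (I - B (B^T B)^{-1} B^T) eps is independent of B^T eps *)
  (hproj : forall j, indep2 P
      (fun w => (1%:M - B *m invmx (B^T *m B) *m B^T) *m eps j w)
      (fun w => B^T *m eps j w)) :
  let U := B *m diag_mx (\row_i (Num.sqrt (lambda i))^-1) in
  forall j : 'I_m,
  exists (eta : 'cV[R]_d -> R) (eta_t fstar_t : 'cV[R]_K -> R),
    (* eta is (a version of) the regression function x |-> P(Y = 1 | X_j = x) *)
    cond_prob_version P (X j) (Y @^-1` [set 1]) eta /\
    (forall x, 0 <= eta x <= 1) /\
    (forall x, eta x = eta_t (U^T *m x)) /\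
    (* the Bayes rule f*(x) = 1 if eta(x) >= 1/2, -1 otherwise *)
    (forall x, (if 2^-1 <= eta x then 1 else -1) = fstar_t (U^T *m x)).
Proof.
move=> U j.
have hBj : forall (F : set 'cV[R]_d), cborel F -> forall j' : 'I_m,
    cborel (if j' == j then F else setT).
  by move=> F hF j'; case: (j' == j) => //; exact: (@measurableT _ (CV R d)).
have hXj : X j = Xf B Z (eps j) by apply/funext => w; rewrite hX.
have hM : forall (C : set 'cV[R]_K) (F : set 'cV[R]_d), cborel C -> cborel F ->
    P (Z @^-1` C `&` eps j @^-1` F) = (P (Z @^-1` C) * P (eps j @^-1` F))%E.
  move=> C F hC hF.
  have := hindep C (fun j' => if j' == j then F else setT) hC (hBj F hF).
  rewrite bigcap_sel => ->; congr (_ * _)%E.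
  rewrite (bigD1 j) //= eqxx big1 ?mule1 // => j' /negbTE ->.
  by rewrite preimage_setT probability_setT.
have hCI : forall G : set 'cV[R]_d, cborel G -> exists g h : 'cV[R]_K -> R,
    cond_prob_version P Z (Y @^-1` [set 1]) g /\
    cond_prob_version P Z (Xf B Z (eps j) @^-1` G) h /\
    forall C, cborel C -> P (Y @^-1` [set 1] `&` Xf B Z (eps j) @^-1` G `&` Z @^-1` C) =
      (\int[P]_(w in Z @^-1` C) (g (Z w) * h (Z w))%:E)%E.
  move=> G hG.
  have [g [h [cg [ch hgh]]]] := hcond [set 1] (fun j' => if j' == j then G else setT)
    (measurable_set1 _) (hBj G hG).
  rewrite bigcap_sel hXj in ch hgh.
  by exists g, h.
have [eta_t [meta [b01 hfin]]] :=
  final_main hBB hlam_pos hZ hY (heps j) hM (hproj j) hCI.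
exists (fun x => eta_t (U^T *m x)), eta_t,
  (fun v => if 2^-1 <= eta_t v then 1 else -1).
split; last by split.
split.
  move=> Bs mBs.
  have : cborel (eta_t @^-1` Bs) by have := meta measurableT Bs mBs; rewrite setTI.
  by move=> h; exact: (cborel_lin (U^T) h).
by move=> C hC; rewrite hXj; exact: hfin.
Qed.
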